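(* Let $f\in\mathcal{A}$ satisfy $\operatorname{Re}\big((1-z^2)f'(z)\big)>0$ for all $z\in\mathbb{D}$ (i.e. $f\in\mathcal{F}_2$), and let $\gamma_1,\gamma_2,\gamma_3$ be its logarithmic coefficients. Then $$|H_{2,1}(F_f)|=|\gamma_1\gamma_3-\gamma_2^2|\le \tfrac14 .$$ The inequality is sharp: equality holds for $\tilde f(z)=\int_0^z \frac{1+t^2}{(1-t^2)^2}\,dt$, which satisfies $(1-z^2)\tilde f'(z)=\frac{1+z^2}{1-z^2}$ and hence lies in $\mathcal{F}_2$.
   Context: $\mathbb{D}=\{z\in\mathbb{C}:|z|<1\}$. $\mathcal{A}$ denotes the class of analytic functions $f$ on $\mathbb{D}$ of the form $f(z)=z+\sum_{n=2}^\infty a_n z^n$. $\mathcal{F}_2=\{f\in\mathcal{A}:\operatorname{Re}(1-z^2)f'(z)>0,\ z\in\mathbb{D}\}$. For such $f$ the logarithmic coefficients $\gamma_n$ are defined by $\log\frac{f(z)}{z}=2\sum_{n=1}^\infty\gamma_n z^n$ (with $\log1=0$); explicitly $\gamma_1=\tfrac12 a_2$, $\gamma_2=\tfrac12(a_3-\tfrac12 a_2^2)$, $\gamma_3=\tfrac14(a_4-a_2a_3+\tfrac13 a_2^3)$. $H_{2,1}(F_f)=\gamma_1\gamma_3-\gamma_2^2=\tfrac14\big(a_2a_4-a_3^2+\tfrac1{12}a_2^4\big)$. *)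

(* Defs.v *)
From Stdlib Require Import Reals.
From Coquelicot Require Import Coquelicot.
Open Scope C_scope.

Definition in_disk (z : C) : Prop := (Cmod z < 1)%R.

Definition class_A (f : C -> C) (a : nat -> C) : Prop :=
  a 0%nat = 0 /\ a 1%nat = 1 /\
  forall z, in_disk z -> is_series (K := C_AbsRing) (fun n => a n * Cpow z n) (f z).

Definition is_cderiv_on_disk (f f' : C -> C) : Prop :=
  forall z, in_disk z -> is_derive (K := C_AbsRing) f z (f' z).

Definition class_F2 (f f' : C -> C) (a : nat -> C) : Prop :=
  class_A f a /\ is_cderiv_on_disk f f' /\
  forall z, in_disk z -> (0 < Re ((1 - z * z) * f' z))%R.

(* Logarithmic coefficients, via the explicit formulas in terms of a_n
   (log(f(z)/z) = 2 sum gamma_n z^n). *)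
Definition gamma1 (a : nat -> C) : C := / 2 * a 2%nat.
Definition gamma2 (a : nat -> C) : C := / 2 * (a 3%nat - / 2 * (a 2%nat * a 2%nat)).
Definition gamma3 (a : nat -> C) : C :=
  / 4 * (a 4%nat - a 2%nat * a 3%nat + / 3 * Cpow (a 2%nat) 3).

Definition H21 (a : nat -> C) : C := gamma1 a * gamma3 a - gamma2 a * gamma2 a.

(* The extremal function f~(z) = int_0^z (1+t^2)/(1-t^2)^2 dt = z/(1-z^2),
   with coefficients a_n = 1 for odd n, 0 for even n. *)
Definition f_ext (z : C) : C := z / (1 - z * z).
Definition a_ext (n : nat) : C := if Nat.odd n then 1 else 0.

(* Main.v *)
Require Import Defs.
From Stdlib Require Import Reals Lra Psatz Lia Arith.
From Coquelicot Require Import Coquelicot.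
Open Scope C_scope.

Fixpoint csum (f : nat -> C) (n : nat) : C :=
  match n with O => 0 | S k => csum f k + f k end.

Lemma csum_ext f g n : (forall i, (i < n)%nat -> f i = g i) -> csum f n = csum g n.
Proof.
  induction n; intros H; simpl; auto.
  rewrite IHn by (intros; apply H; lia). rewrite H by lia. reflexivity.
Qed.

Lemma csum_plus f g n : csum (fun i => f i + g i) n = csum f n + csum g n.
Proof. induction n; simpl. ring. rewrite IHn. ring. Qed.

Lemma csum_scal c f n : csum (fun i => c * f i) n = c * csum f n.
Proof. induction n; simpl. ring. rewrite IHn. ring. Qed.

Lemma csum_scal_r c f n : csum (fun i => f i * c) n = csum f n * c.
Proof. induction n; simpl. ring. rewrite IHn. ring. Qed.

Lemma csum_zero n : csum (fun _ => 0) n = 0.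
Proof. induction n; simpl. auto. rewrite IHn. ring. Qed.

Lemma csum_const c n : csum (fun _ => c) n = RtoC (INR n) * c.
Proof.
  induction n; simpl csum.
  - simpl. ring.
  - rewrite IHn. rewrite S_INR. rewrite RtoC_plus. ring.
Qed.

Lemma csum_swap (g : nat -> nat -> C) m n :
  csum (fun i => csum (fun j => g i j) n) m = csum (fun j => csum (fun i => g i j) m) n.
Proof.
  induction m; simpl.
  - rewrite csum_zero. reflexivity.
  - rewrite IHm. rewrite <- csum_plus. reflexivity.
Qed.

Lemma csum_delta (g : nat -> C) i0 n :
  csum (fun i => if Nat.eqb i i0 then g i else 0) n = if Nat.ltb i0 n then g i0 else 0.
Proof.
  induction n; simpl.
  - destruct i0; reflexivity.
  - rewrite IHn.
    destruct (Nat.eqb_spec n i0) as [E|E].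
    + subst. rewrite Nat.ltb_irrefl. assert (Nat.ltb i0 (S i0) = true) by (apply Nat.ltb_lt; lia).
      rewrite H. ring.
    + destruct (Nat.ltb_spec i0 n); destruct (Nat.ltb_spec i0 (S n)); try lia; ring.
Qed.

Lemma csum_geom w n : (w - 1) * csum (fun m => w ^ m) n = w ^ n - 1.
Proof.
  induction n; simpl csum.
  - simpl. ring.
  - rewrite Cmult_plus_distr_l, IHn. rewrite Cpow_S. ring.
Qed.

Lemma csum_conj f n : Cconj (csum f n) = csum (fun i => Cconj (f i)) n.
Proof.
  induction n; simpl.
  - apply injective_projections; simpl; ring.
  - rewrite Cplus_conj, IHn. reflexivity.
Qed.

Definition om (N : nat) : C := (cos (2 * PI / INR N), sin (2 * PI / INR N)).

Lemma demoivre th n : (cos th, sin th) ^ n = (cos (INR n * th), sin (INR n * th)).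
Proof.
  induction n.
  - simpl. rewrite Rmult_0_l, cos_0, sin_0. reflexivity.
  - rewrite Cpow_S, IHn. rewrite S_INR.
    replace ((INR n + 1) * th)%R with (th + INR n * th)%R by ring.
    rewrite cos_plus, sin_plus.
    apply injective_projections; simpl; ring.
Qed.

Lemma om_pow N t : (0 < N)%nat -> om N ^ t = (cos (INR t * (2 * PI / INR N)), sin (INR t * (2 * PI / INR N))).
Proof. intros. unfold om. apply demoivre. Qed.

Lemma om_N N : (0 < N)%nat -> om N ^ N = 1.
Proof.
  intros H. rewrite om_pow by auto.
  assert (INR N <> 0%R) by (apply not_0_INR; lia).
  replace (INR N * (2 * PI / INR N))%R with (2 * PI)%R by (field; auto).
  rewrite cos_2PI, sin_2PI. reflexivity.
Qed.

Lemma om_ne1 N t : (0 < t < N)%nat -> om N ^ t <> 1.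
Proof.
  intros H E. rewrite om_pow in E by lia.
  set (x := (INR t * (2 * PI / INR N))%R) in *.
  assert (Hc : cos x = 1%R) by (apply (f_equal fst) in E; simpl in E; exact E).
  assert (HN : (0 < INR N)%R) by (apply lt_0_INR; lia).
  assert (Ht : (0 < INR t)%R) by (apply lt_0_INR; lia).
  assert (HtN : (INR t < INR N)%R) by (apply lt_INR; lia).
  assert (Hx0 : (0 < x / 2)%R).
  { unfold x. apply Rmult_lt_0_compat; [|lra].
    apply Rmult_lt_0_compat; auto. apply Rdiv_lt_0_compat; auto. pose proof PI_RGT_0. lra. }
  assert (Hx1 : (x / 2 < PI)%R).
  { unfold x. replace (INR t * (2 * PI / INR N) / 2)%R with (PI * (INR t / INR N))%R by (field; lra).
    pose proof PI_RGT_0.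
    assert (INR t / INR N < 1)%R. { apply (Rmult_lt_reg_r (INR N)); auto. field_simplify; lra. }
    nra. }
  pose proof (sin_gt_0 _ Hx0 Hx1).
  pose proof (cos_2a_sin (x / 2)).
  replace (2 * (x / 2))%R with x in H1 by field.
  nra.
Qed.

Lemma orth N t : (0 < t < 2 * N)%nat ->
  csum (fun m => (om N ^ t) ^ m) N = if Nat.eqb t N then RtoC (INR N) else 0.
Proof.
  intros H.
  destruct (Nat.eqb_spec t N) as [E|E].
  - subst. rewrite om_N by lia.
    rewrite (csum_ext _ (fun _ => 1)). rewrite csum_const. ring.
    intros. apply Cpow_1_l.
  - assert (Hw : om N ^ t <> 1).
    { destruct (Nat.lt_ge_cases t N).
      - apply om_ne1. lia.
      - replace t with (N + (t - N))%nat by lia. rewrite Cpow_add_r, om_N by lia.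
        rewrite Cmult_1_l. apply om_ne1. lia. }
    assert (HwN : (om N ^ t) ^ N = 1).
    { rewrite <- Cpow_mult_r. rewrite Nat.mul_comm. rewrite Cpow_mult_r. rewrite om_N by lia.
      apply Cpow_1_l. }
    pose proof (csum_geom (om N ^ t) N) as G. rewrite HwN in G.
    assert (Hnz : om N ^ t - 1 <> 0).
    { intro Z. apply Hw. replace (om N ^ t) with (om N ^ t - 1 + 1) by ring. rewrite Z. ring. }
    replace (1 - 1) with (RtoC 0) in G by ring.
    replace (csum (fun m : nat => (om N ^ t) ^ m) N) with
      (/ (om N ^ t - 1) * ((om N ^ t - 1) * csum (fun m : nat => (om N ^ t) ^ m) N))
      by (field; exact Hnz).
    rewrite G. ring.
Qed.

Lemma Cmod_om N : (0 < N)%nat -> Cmod (om N) = 1%R.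
Proof.
  intros. unfold om, Cmod. simpl.
  transitivity (sqrt 1). f_equal. pose proof (sin2_cos2 (2 * PI / INR N)) as E. unfold Rsqr in E. nra. apply sqrt_1.
Qed.

Lemma conj_root (z : C) N j : z ^ N = 1 -> Cmod z = 1%R -> (j <= N)%nat ->
  Cconj z ^ j = z ^ (N - j).
Proof.
  intros HN Hm Hj.
  assert (Hzc : z * Cconj z = 1).
  { rewrite <- Cmod2_conj. rewrite Hm. apply injective_projections; simpl; ring. }
  assert (A : Cconj z ^ j * z ^ j = 1).
  { rewrite <- Cpow_mult_l. rewrite Cmult_comm, Hzc. apply Cpow_1_l. }
  assert (B : z ^ j * z ^ (N - j) = 1).
  { rewrite <- Cpow_add_r. replace (j + (N - j))%nat with N by lia. exact HN. }
  transitivity (Cconj z ^ j * (z ^ j * z ^ (N - j))).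
  - rewrite B. ring.
  - rewrite Cmult_assoc, A. ring.
Qed.

Definition ppoly (e : nat -> C) (L : nat) (z : C) : C := csum (fun n => e n * z ^ n) L.

Lemma mono (e : nat -> C) (L N : nat) (r : C) (k j : nat) :
  (4 <= L)%nat -> (L + 4 <= N)%nat -> (k <= 3)%nat -> (j <= 3)%nat ->
  csum (fun m => ppoly e L (r * om N ^ m) * (om N ^ m) ^ k * Cconj (om N ^ m) ^ j) N
  = if Nat.leb k j then RtoC (INR N) * (e (j - k)%nat * r ^ (j - k)) else 0.
Proof.
  intros HL HN Hk Hj.
  assert (HN0 : (0 < N)%nat) by lia.
  rewrite (csum_ext _ (fun m => csum (fun n => (e n * r ^ n) * (om N ^ (n + k + (N - j))) ^ m) L)).
  2:{ intros m Hm. unfold ppoly.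
      rewrite (conj_root (om N ^ m) N j).
      2:{ rewrite <- Cpow_mult_r, Nat.mul_comm, Cpow_mult_r, om_N by lia. apply Cpow_1_l. }
      2:{ rewrite Cmod_pow, Cmod_om by lia. apply pow1. }
      2:{ lia. }
      rewrite <- Cmult_assoc, Cmult_comm, <- csum_scal.
      apply csum_ext. intros n Hn.
      rewrite <- (Cpow_mult_r (om N) (n + k + (N - j)) m).
      replace ((n + k + (N - j)) * m)%nat with (m * n + m * k + m * (N - j))%nat by ring.
      rewrite !Cpow_add_r, !Cpow_mult_r, Cpow_mult_l. ring. }
  rewrite csum_swap.
  rewrite (csum_ext _ (fun n => (e n * r ^ n) * (if Nat.eqb (n + k + (N - j)) N then RtoC (INR N) else 0))).
  2:{ intros n Hn. rewrite csum_scal. rewrite orth by lia. reflexivity. }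
  destruct (Nat.leb_spec k j).
  - rewrite (csum_ext _ (fun n => if Nat.eqb n (j - k) then RtoC (INR N) * (e n * r ^ n) else 0)).
    2:{ intros n Hn. destruct (Nat.eqb_spec (n + k + (N - j)) N); destruct (Nat.eqb_spec n (j - k));
        try lia; ring. }
    rewrite csum_delta. replace (Nat.ltb (j - k) L) with true. reflexivity.
    symmetry. apply Nat.ltb_lt. lia.
  - rewrite (csum_ext _ (fun _ => 0)). apply csum_zero.
    intros n Hn. destruct (Nat.eqb_spec (n + k + (N - j)) N); try lia; ring.
Qed.

Definition TformG (C0 C1 C2 C3 x0 x1 x2 x3 : C) : C :=
  C0 * (x0 * Cconj x0 + x1 * Cconj x1 + x2*Cconj x2 + x3 * Cconj x3)
  + C1 * (x0 * Cconj x1 + x1 * Cconj x2 + x2 * Cconj x3)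
  + C2 * (x0 * Cconj x2 + x1 * Cconj x3) + C3 * (x0 * Cconj x3).

Definition Pv (x : nat -> C) (z : C) : C := csum (fun k => x k * z ^ k) 4.

Lemma fourier_form e L N r x : (4 <= L)%nat -> (L + 4 <= N)%nat ->
  csum (fun m => ppoly e L (r * om N ^ m) * Pv x (om N ^ m) * Cconj (Pv x (om N ^ m))) N
  = RtoC (INR N) * TformG (e 0%nat) (e 1%nat * r) (e 2%nat * r ^ 2) (e 3%nat * r ^ 3)
      (x 0%nat) (x 1%nat) (x 2%nat) (x 3%nat).
Proof.
  intros HL HN.
  rewrite (csum_ext _ (fun m => csum (fun k => csum (fun j => (x k * Cconj (x j)) *
     (ppoly e L (r * om N ^ m) * (om N ^ m) ^ k * Cconj (om N ^ m) ^ j)) 4) 4)).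
  2:{ intros m Hm. unfold Pv. rewrite csum_conj.
      set (P := ppoly e L (r * om N ^ m)). set (w := om N ^ m).
      simpl csum. rewrite ?Cplus_conj, ?Cmult_conj, ?Cpow_conj. simpl. replace (Cconj 1) with (RtoC 1) by (apply injective_projections; simpl; ring). ring. }
  rewrite csum_swap.
  rewrite (csum_ext _ (fun k => csum (fun j => (x k * Cconj (x j)) *
     (if Nat.leb k j then RtoC (INR N) * (e (j - k)%nat * r ^ (j - k)) else 0)) 4)).
  2:{ intros k Hk. rewrite csum_swap. apply csum_ext. intros j Hj.
      rewrite csum_scal. rewrite mono by lia. reflexivity. }
  unfold TformG. simpl. ring.
Qed.


Lemma norm_C (z : C) : @norm C_AbsRing C_NormedModule z = Cmod z.
Proof. reflexivity. Qed.

Lemma minus_C (y x : C) : @minus C_NormedModule y x = y - x.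
Proof. reflexivity. Qed.

Lemma ball_C (x y : C) (eps : R) : (Cmod (y - x) < eps)%R -> @ball C_NormedModule x eps y.
Proof. intros H. apply norm_compat1. exact H. Qed.

Lemma sqrt2_lt2 : (sqrt 2 < 2)%R.
Proof.
  rewrite <- (sqrt_square 2) at 2 by lra. apply sqrt_lt_1; lra.
Qed.

Lemma C_ball_norm (x y : C) (eps : posreal) : @ball C_NormedModule x eps y -> (Cmod (y - x) < 2 * eps)%R.
Proof.
  intros H. pose proof (norm_compat2 x y eps H) as H1.
  change (Cmod (y - x) < sqrt 2 * eps)%R in H1.
  pose proof sqrt2_lt2. destruct eps as [e He]; simpl in *. nra.
Qed.

Lemma sum_n_csum (a : nat -> C) N : @sum_n C_AbelianMonoid a N = csum a (S N).
Proof.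
  induction N.
  - rewrite sum_O. simpl. change (a 0%nat = 0 + a 0%nat). ring.
  - rewrite sum_Sn, IHN. reflexivity.
Qed.

Lemma series_eps (a : nat -> C) (l : C) :
  @is_series C_AbsRing C_NormedModule a l ->
  forall eps, (0 < eps)%R -> exists N0, forall N, (N0 <= N)%nat -> (Cmod (csum a N - l) < eps)%R.
Proof.
  intros H eps Heps.
  assert (He2 : (0 < eps / 2)%R) by lra.
  pose proof (proj1 (filterlim_locally _ _) H (mkposreal _ He2)) as H1.
  destruct H1 as [N0 HN0].
  exists (S N0). intros N HN.
  destruct N as [|N]; [lia|].
  specialize (HN0 N ltac:(lia)).
  apply C_ball_norm in HN0. simpl in HN0.
  rewrite <- sum_n_csum.
  replace (eps) with (2 * (eps / 2))%R by field. exact HN0.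
Qed.

Lemma conv_der (f : C -> C) x l :
  @is_derive C_AbsRing (AbsRing_NormedModule C_AbsRing) f x l -> @is_derive C_AbsRing C_NormedModule f x l.
Proof. intros [H1 H2]. split.
 - destruct H1 as [A B [M [HM HM2]]]. split. exact A. exact B. exists M. split. exact HM. exact HM2.
 - intros y Hy. exact (H2 y Hy).
Qed.

Lemma is_derive_eq (f : C -> C) x l l' :
  @is_derive C_AbsRing C_NormedModule f x l -> l = l' -> @is_derive C_AbsRing C_NormedModule f x l'.
Proof. intros H E; subst; exact H. Qed.

Lemma is_derive_eqA (f : C -> C) x l l' :
  @is_derive C_AbsRing (AbsRing_NormedModule C_AbsRing) f x l -> l = l' ->
  @is_derive C_AbsRing (AbsRing_NormedModule C_AbsRing) f x l'.
Proof. intros H E; subst; exact H. Qed.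

Lemma deriv_pow_A n z :
  @is_derive C_AbsRing (AbsRing_NormedModule C_AbsRing) (fun w : C => w ^ S n) z (INR (S n) * z ^ n).
Proof.
  induction n.
  - eapply is_derive_eqA.
    eapply is_derive_ext. 2: apply (is_derive_id (K := C_AbsRing)).
    intros t. simpl. apply injective_projections; simpl; ring.
    simpl. apply injective_projections; simpl; ring.
  - eapply is_derive_eqA.
    eapply is_derive_ext. 2: apply (is_derive_mult (K := C_AbsRing) (fun w => w) (fun w => w ^ S n)).
    intros t. simpl. reflexivity.
    apply (is_derive_id (K := C_AbsRing)). exact IHn.
    intros. apply Cmult_comm.
    change (1 * z ^ S n + z * (INR (S n) * z ^ n) = INR (S (S n)) * z ^ S n).
    rewrite (S_INR (S n)). rewrite RtoC_plus. simpl. ring.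
Qed.

Lemma deriv_pow n z :
  @is_derive C_AbsRing C_NormedModule (fun w : C => w ^ S n) z (INR (S n) * z ^ n).
Proof. apply conv_der, deriv_pow_A. Qed.


Definition dcoef (a : nat -> C) (k : nat) : C := a (S k) * INR (S k).

Lemma deriv_ppoly a M z :
  @is_derive C_AbsRing C_NormedModule (ppoly a (S M)) z (ppoly (dcoef a) M z).
Proof.
  induction M.
  - eapply is_derive_eq. eapply is_derive_ext. 2: apply (is_derive_const (K := C_AbsRing) (V := C_NormedModule) (a 0%nat)).
    intros t. unfold ppoly. simpl. ring.
    unfold ppoly; simpl. reflexivity.
  - eapply is_derive_eq.
    eapply is_derive_ext. 2: apply (is_derive_plus (K := C_AbsRing) (V := C_NormedModule)).
    2: exact IHM.
    2: apply (is_derive_scal_l (K := C_AbsRing) (V := C_NormedModule) (fun w => w ^ S M) z (INR (S M) * z ^ M) (a (S M))).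
    2: apply deriv_pow_A.
    intros t. unfold ppoly. simpl csum at 1. change (ppoly a (S M) t + (t ^ S M * a (S M)) = csum (fun n : nat => a n * t ^ n) (S M) + a (S M) * t ^ S M).
    unfold ppoly. apply injective_projections; simpl; ring.
    change (ppoly (dcoef a) M z + (INR (S M) * z ^ M) * a (S M) = ppoly (dcoef a) (S M) z).
    unfold ppoly, dcoef. simpl csum. apply injective_projections; simpl; ring.
Qed.

Lemma deriv_lip (phi : C -> C) z l (L dlt : R) :
  @is_derive C_AbsRing C_NormedModule phi z l -> (0 < dlt)%R ->
  (forall w, (Cmod (w - z) < dlt)%R -> (Cmod (phi w - phi z) <= L * Cmod (w - z))%R) ->
  (Cmod l <= L)%R.
Proof.
  intros [_ Hd] Hdlt Hlip.
  assert (Hz : is_filter_lim (locally z) z) by (intros P HP; exact HP).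
  specialize (Hd z Hz).
  apply Rnot_lt_le. intros Hlt.
  set (eps := ((Cmod l - L) / 2)%R).
  assert (Heps : (0 < eps)%R) by (unfold eps; lra).
  destruct (Hd (mkposreal eps Heps)) as [e He]. simpl in He.
  set (h := (Rmin e dlt / 2)%R).
  assert (Hh : (0 < h)%R).
  { unfold h. apply Rmin_case; destruct e; simpl; lra. }
  assert (Hh1 : (h < e)%R).
  { unfold h. pose proof (Rmin_l e dlt). destruct e; simpl in *; lra. }
  assert (Hh2 : (h < dlt)%R).
  { unfold h. pose proof (Rmin_r e dlt). lra. }
  assert (Hwz : Cmod (z + RtoC h - z) = h).
  { replace (z + RtoC h - z) with (RtoC h) by ring. rewrite Cmod_R. apply Rabs_pos_eq. lra. }
  specialize (He (z + RtoC h)).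
  assert (Hb : @ball (AbsRing_UniformSpace C_AbsRing) z e (z + RtoC h)).
  { change (Cmod (z + RtoC h - z) < e)%R. rewrite Hwz. exact Hh1. }
  specialize (He Hb).
  change (Cmod (phi (z + RtoC h)%C - phi z - (z + RtoC h - z) * l) <= eps * Cmod (z + RtoC h - z))%R in He.
  rewrite Hwz in He.
  specialize (Hlip (z + RtoC h)). rewrite Hwz in Hlip. specialize (Hlip Hh2).
  assert (Cmod ((z + RtoC h - z) * l) <= Cmod (phi (z + RtoC h)%C - phi z) + Cmod (phi (z + RtoC h)%C - phi z - (z + RtoC h - z) * l))%R.
  { replace ((z + RtoC h - z) * l) with ((phi (z + RtoC h) - phi z) - (phi (z + RtoC h) - phi z - (z + RtoC h - z) * l)) at 1 by ring.
    unfold Cminus at 1. eapply Rle_trans. apply Cmod_triangle. rewrite Cmod_opp. lra. }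
  rewrite Cmod_mult, Hwz in H.
  assert (h * Cmod l <= h * (L + eps))%R by lra.
  apply Rmult_le_reg_l in H0; [|lra]. unfold eps in H0. lra.
Qed.

Lemma Cmod_sub_le (x y : C) : (Cmod (x - y) <= Cmod x + Cmod y)%R.
Proof. unfold Cminus. eapply Rle_trans. apply Cmod_triangle. rewrite Cmod_opp. lra. Qed.

Lemma Cmod_sub_tri (x y z : C) : (Cmod (x - z) <= Cmod (x - y) + Cmod (y - z))%R.
Proof. replace (x - z) with ((x - y) + (y - z)) by ring. apply Cmod_triangle. Qed.

Lemma tail_fin (g : nat -> C) (B q : R) (M j : nat) :
  (0 <= B)%R -> (0 <= q < 1)%R ->
  (forall n, (M <= n)%nat -> (Cmod (g n) <= B * q ^ n)%R) ->
  (Cmod (csum g (M + j) - csum g M) <= B * q ^ M * (1 - q ^ j) / (1 - q))%R.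
Proof.
  intros HB Hq Hg. induction j.
  - rewrite Nat.add_0_r. replace (csum g M - csum g M) with (RtoC 0) by ring.
    rewrite Cmod_0. simpl. replace (B * q ^ M * (1 - 1) / (1 - q))%R with 0%R by (field; lra). lra.
  - replace (M + S j)%nat with (S (M + j)) by lia. simpl csum.
    replace (csum g (M + j) + g (M + j)%nat - csum g M) with ((csum g (M + j) - csum g M) + g (M + j)%nat) by ring.
    eapply Rle_trans. apply Cmod_triangle.
    specialize (Hg (M + j)%nat ltac:(lia)).
    rewrite pow_add in Hg.
    replace (B * q ^ M * (1 - q ^ S j) / (1 - q))%R with
      (B * q ^ M * (1 - q ^ j) / (1 - q) + B * (q ^ M * q ^ j))%R by (simpl; field; lra).
    lra.
Qed.

Lemma tail (g : nat -> C) (l : C) (B q : R) (M : nat) :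
  @is_series C_AbsRing C_NormedModule g l ->
  (0 <= B)%R -> (0 <= q < 1)%R ->
  (forall n, (M <= n)%nat -> (Cmod (g n) <= B * q ^ n)%R) ->
  (Cmod (l - csum g M) <= B * q ^ M / (1 - q))%R.
Proof.
  intros Hs HB Hq Hg.
  apply Rnot_lt_le. intros Hlt.
  set (D := (Cmod (l - csum g M) - B * q ^ M / (1 - q))%R).
  assert (HD : (0 < D)%R) by (unfold D; lra).
  destruct (series_eps g l Hs D HD) as [N0 HN0].
  specialize (HN0 (M + N0)%nat ltac:(lia)).
  pose proof (tail_fin g B q M N0 HB Hq Hg) as Hf.
  assert (Hqj : (0 <= q ^ N0)%R) by (apply pow_le; lra).
  assert (Hqm : (0 <= q ^ M)%R) by (apply pow_le; lra).
  assert (B * q ^ M * (1 - q ^ N0) / (1 - q) <= B * q ^ M / (1 - q))%R.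
  { unfold Rdiv. apply Rmult_le_compat_r. apply Rlt_le, Rinv_0_lt_compat. lra.
    assert (0 <= B * q ^ M)%R by (apply Rmult_le_pos; lra). nra. }
  pose proof (Cmod_sub_tri l (csum g (M + N0)) (csum g M)).
  rewrite <- Cmod_opp in HN0. replace (- (csum g (M + N0) - l)) with (l - csum g (M + N0)) in HN0 by ring.
  unfold D in *. lra.
Qed.

Lemma coef_bound (a : nat -> C) (l : C) (rho : R) :
  (0 < rho)%R ->
  @is_series C_AbsRing C_NormedModule (fun n => a n * RtoC rho ^ n) l ->
  exists N0, forall n, (N0 <= n)%nat -> (Cmod (a n) * rho ^ n <= 1)%R.
Proof.
  intros Hr Hs.
  destruct (series_eps _ l Hs (1/2)%R ltac:(lra)) as [N0 HN0].
  exists N0. intros n Hn.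
  pose proof (HN0 n Hn) as H1. pose proof (HN0 (S n) ltac:(lia)) as H2.
  simpl csum in H2.
  set (S0 := csum (fun n0 : nat => a n0 * RtoC rho ^ n0) n) in *.
  assert (Cmod (a n * RtoC rho ^ n) <= 1)%R.
  { replace (a n * RtoC rho ^ n) with ((S0 + a n * RtoC rho ^ n - l) - (S0 - l)) by ring.
    eapply Rle_trans. apply Cmod_sub_le. lra. }
  rewrite Cmod_mult, Cmod_pow, Cmod_R, Rabs_pos_eq in H by lra. exact H.
Qed.

Lemma pow_diff (w z : C) (R : R) n :
  (Cmod w <= R)%R -> (Cmod z <= R)%R ->
  (Cmod (w ^ S n - z ^ S n) <= INR (S n) * R ^ n * Cmod (w - z))%R.
Proof.
  intros Hw Hz. induction n.
  - simpl. replace (w * 1 - z * 1) with (w - z) by ring. lra.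
  - replace (w ^ S (S n) - z ^ S (S n)) with (w * (w ^ S n - z ^ S n) + (w - z) * z ^ S n)
      by (rewrite !(Cpow_S _ (S n)); ring).
    eapply Rle_trans. apply Cmod_triangle.
    rewrite !Cmod_mult, Cmod_pow.
    assert (HR : (0 <= R)%R) by (pose proof (Cmod_ge_0 w); lra).
    assert (H1 : (Cmod w * Cmod (w ^ S n - z ^ S n) <= R * (INR (S n) * R ^ n * Cmod (w - z)))%R).
    { apply Rmult_le_compat; auto using Cmod_ge_0. }
    assert (H2 : (Cmod (w - z) * Cmod z ^ S n <= Cmod (w - z) * R ^ S n)%R).
    { apply Rmult_le_compat_l. apply Cmod_ge_0. apply pow_incr. split; auto using Cmod_ge_0. }
    rewrite (S_INR (S n)). simpl pow in *. lra.
Qed.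

Lemma bern (h : R) n : (0 < h)%R -> (INR n * (/ (1 + h)) ^ n <= / h)%R.
Proof.
  intros Hh.
  pose proof (Rle_pow_lin h n ltac:(lra)) as H.
  assert (Hp : (0 < (1 + h) ^ n)%R) by (apply pow_lt; lra).
  rewrite pow_inv.
  apply (Rmult_le_reg_r (h * (1 + h) ^ n)). nra.
  replace (INR n * / (1 + h) ^ n * (h * (1 + h) ^ n))%R with (INR n * h)%R by (field; lra).
  replace (/ h * (h * (1 + h) ^ n))%R with ((1 + h) ^ n)%R by (field; lra).
  lra.
Qed.

Lemma csum_minus f g n : csum (fun i => f i - g i) n = csum f n - csum g n.
Proof. induction n; simpl. ring. rewrite IHn. ring. Qed.

Lemma deriv_approx f f' a r :
  class_A f a -> is_cderiv_on_disk f f' -> (0 <= r < 1)%R ->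
  exists K q M0, (0 <= K)%R /\ (0 <= q < 1)%R /\
    forall M z, (M0 <= M)%nat -> (Cmod z <= r)%R ->
      (Cmod (f' z - ppoly (dcoef a) M z) <= K * q ^ M)%R.
Proof.
  intros [Ha0 [Ha1 Hser]] Hder Hr.
  set (R0 := ((1 + r) / 2)%R).
  set (h := ((1 - R0) / 4)%R).
  set (rho := (R0 * (1 + h) ^ 2)%R).
  set (q := (/ (1 + h))%R).
  assert (HR0 : (0 < R0 < 1)%R) by (unfold R0; lra).
  assert (Hh : (0 < h)%R) by (unfold h; lra).
  assert (Hrho : (0 < rho < 1)%R).
  { unfold rho, h. simpl. clearbody R0. split. nra.
    assert (E : (R0 * (1 + (1 - R0) / 4) * ((1 + (1 - R0) / 4) * 1) - 1 = (R0 - 1) * (R0 * R0 - 9 * R0 + 16) / 16)%R) by field.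
    assert (0 < R0 * R0 - 9 * R0 + 16)%R by nra.
    assert ((R0 - 1) * (R0 * R0 - 9 * R0 + 16) < 0)%R by nra.
    lra. }
  assert (Hq : (0 < q < 1)%R).
  { unfold q. split. apply Rinv_0_lt_compat; lra. rewrite <- Rinv_1. apply Rinv_lt_contravar; lra. }
  assert (Hsr : @is_series C_AbsRing C_NormedModule (fun n => a n * RtoC rho ^ n) (f rho)).
  { apply Hser. unfold in_disk. rewrite Cmod_R, Rabs_pos_eq; lra. }
  destruct (coef_bound a (f rho) rho ltac:(lra) Hsr) as [N0 HN0].
  set (K0 := (/ (R0 * h * (1 - q)))%R).
  assert (HK0 : (0 < K0)%R).
  { unfold K0. apply Rinv_0_lt_compat. apply Rmult_lt_0_compat. nra. lra. }
  exists K0, q, N0. split; [lra|]. split; [lra|].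
  intros M z HM Hz.
  assert (Hzd : in_disk z) by (unfold in_disk; lra).
  set (phi := fun w => f w - ppoly a (S M) w).
  assert (Hphi : @is_derive C_AbsRing C_NormedModule phi z (f' z - ppoly (dcoef a) M z)).
  { unfold phi. apply (is_derive_minus (K := C_AbsRing) (V := C_NormedModule)).
    apply Hder; auto. apply deriv_ppoly. }
  assert (Hlip : forall w, (Cmod (w - z) < R0 - r)%R ->
     (Cmod (phi w - phi z) <= (q ^ S M * K0) * Cmod (w - z))%R).
  { intros w Hw.
    assert (HwR : (Cmod w <= R0)%R).
    { replace w with ((w - z) + z) by ring. eapply Rle_trans. apply Cmod_triangle. lra. }
    assert (Hzr : (Cmod z <= R0)%R) by (unfold R0; lra).
    assert (Hwd : in_disk w) by (unfold in_disk; lra).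
    set (g := fun n => a n * w ^ n - a n * z ^ n).
    assert (Hg : @is_series C_AbsRing C_NormedModule g (f w - f z)).
    { pose proof (is_series_minus _ _ _ _ (Hser w Hwd) (Hser z Hzd)) as H.
      exact H. }
    set (B := (Cmod (w - z) / (R0 * h))%R).
    assert (HB : (0 <= B)%R).
    { unfold B. apply Rmult_le_pos. apply Cmod_ge_0. apply Rlt_le, Rinv_0_lt_compat. nra. }
    assert (Hbound : forall n, (S M <= n)%nat -> (Cmod (g n) <= B * q ^ n)%R).
    { intros n Hn. destruct n as [|k]; [lia|].
      unfold g. replace (a (S k) * w ^ S k - a (S k) * z ^ S k) with (a (S k) * (w ^ S k - z ^ S k)) by ring.
      rewrite Cmod_mult.
      pose proof (HN0 (S k) ltac:(lia)) as Ha.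
      pose proof (pow_diff w z R0 k HwR Hzr) as Hp.
      pose proof (bern h (S k) Hh) as Hb.
      set (Q := ((1 + h) ^ S k)%R).
      assert (HQ : (0 < Q)%R) by (apply pow_lt; lra).
      assert (Hrhon : (rho ^ S k = R0 ^ S k * Q * Q)%R).
      { unfold rho, Q. rewrite Rpow_mult_distr. rewrite <- pow_mult. rewrite Rmult_assoc, <- pow_add.
        f_equal. f_equal. lia. }
      assert (Hqn : (q ^ S k = / Q)%R) by (unfold q, Q; apply pow_inv).
      rewrite Hqn. fold q in Hb. rewrite Hqn in Hb.
      assert (HR0k : (0 < R0 ^ k)%R) by (apply pow_lt; lra).
      assert (HaS : (Cmod (a (S k)) <= / (R0 ^ S k * Q * Q))%R).
      { rewrite Hrhon in Ha. apply (Rmult_le_reg_r (R0 ^ S k * Q * Q)).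
        simpl. apply Rmult_lt_0_compat; [|lra]. apply Rmult_lt_0_compat; [|lra]. nra.
        rewrite Rinv_l. lra. simpl. apply Rgt_not_eq. apply Rmult_lt_0_compat; [|lra]. apply Rmult_lt_0_compat; [|lra]. nra. }
      eapply Rle_trans. apply Rmult_le_compat. apply Cmod_ge_0. apply Cmod_ge_0. exact HaS. exact Hp.
      unfold B. simpl pow.
      replace (/ (R0 * R0 ^ k * Q * Q) * (INR (S k) * R0 ^ k * Cmod (w - z)))%R
        with ((INR (S k) * / Q) * (Cmod (w - z) / (R0 * Q)))%R by (field; lra).
      replace (Cmod (w - z) / (R0 * h) * / Q)%R with (/ h * (Cmod (w - z) / (R0 * Q)))%R by (field; lra).
      apply Rmult_le_compat_r. unfold Rdiv. apply Rmult_le_pos. apply Cmod_ge_0.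
      apply Rlt_le, Rinv_0_lt_compat. nra. exact Hb. }
    pose proof (tail g (f w - f z) B q (S M) Hg HB ltac:(lra) Hbound) as Ht.
    assert (Hcs : csum g (S M) = ppoly a (S M) w - ppoly a (S M) z).
    { unfold g, ppoly. apply csum_minus. }
    rewrite Hcs in Ht.
    unfold phi. replace (f w - ppoly a (S M) w - (f z - ppoly a (S M) z)) with
      (f w - f z - (ppoly a (S M) w - ppoly a (S M) z)) by ring.
    eapply Rle_trans. exact Ht.
    unfold B, K0. apply Req_le. field. split; [lra|]. split; lra. }
  pose proof (deriv_lip phi z _ _ (R0 - r) Hphi ltac:(unfold R0; lra) Hlip) as H.
  eapply Rle_trans. exact H.
  rewrite Rmult_comm. apply Rmult_le_compat_l. lra.
  simpl. assert (0 <= q ^ M)%R by (apply pow_le; lra). nra.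
Qed.

Definition Tform (C1 C2 C3 x0 x1 x2 x3 : C) : C :=
  x0 * Cconj x0 + x1 * Cconj x1 + x2*Cconj x2 + x3 * Cconj x3
  + C1 * (x0 * Cconj x1 + x1 * Cconj x2 + x2 * Cconj x3)
  + C2 * (x0 * Cconj x2 + x1 * Cconj x3) + C3 * (x0 * Cconj x3).

Lemma I1_id (C1 C2 C3 : C) :
  Re (Tform C1 C2 C3 (- Cconj C1 / 2) 1 0 0) = (1 - (Re C1 ^ 2 + Im C1 ^ 2) / 4)%R.
Proof.
  destruct C1 as [p1 q1]; destruct C2 as [p2 q2]; destruct C3 as [p3 q3].
  unfold Tform; simpl. field.
Qed.

Definition sq (z : C) : R := (Re z ^ 2 + Im z ^ 2)%R.
Definition sv (u : C) : R := (1 - sq u)%R.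

Lemma I2_id (u D2 C3 : C) :
  let s := sv u in
  Re (Tform (2*u) (2*u*u + D2) C3 (- Cconj D2) (Cconj D2 * u - 2 * s * Cconj u) (2 * s) 0)
  = (s * (4 * s * s - sq D2))%R.
Proof.
  destruct u as [p1 q1]; destruct D2 as [p2 q2]; destruct C3 as [p3 q3].
  unfold Tform, sv, sq; simpl. ring.
Qed.

Lemma I3_id (u D2 D3 lam : C) :
  let s := sv u in
  s <> 0%R ->
  let a2 := RtoC s in let a1 := - s * u + D2 * Cconj u / 2 in let a0 := - D2 / 2 in
  Re (Tform (2*u) (2*u*u + D2) (2*u*u*u + 2*u*D2 - Cconj u * D2 * D2 / (2 * s) + D3)
        (Cconj (- lam * Cconj a2)) (Cconj (a0 - lam * Cconj a1))
        (Cconj (a1 - lam * Cconj a0)) (Cconj a2))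
  = (s * (s * s - sq D2 / 4) * (1 + sq lam) - Re (Cconj lam * (s * s) * D3))%R.
Proof.
  intros s Hs.
  destruct u as [p1 q1]; destruct D2 as [p2 q2]; destruct D3 as [p3 q3];
  destruct lam as [l1 l2].
  intros a2 a1 a0; subst a2 a1 a0. unfold Tform, sv, sq in *; simpl in *. subst s. field. lra.
Qed.

Definition Wfun (C1 C2 C3 : C) : C :=
  let a2 := C1 / 2 in let a3 := (C2 + 1) / 3 in let a4 := (C3 + C1) / 4 in
  a2 * a4 + a2 * a2 * a3 - 2 * a3 * a3 - a2 * a2 * a2 * a2 / 6.

Lemma W_id (u D2 D3 : C) :
  let s := sv u in
  s <> 0%R ->
  let v := D2 / (2 * s) in
  36 * Wfun (2*u) (2*u*u + D2) (2*u*u*u + 2*u*D2 - Cconj u * D2 * D2 / (2 * s) + D3)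
  = 4*u*u*u*u - 4*s*u*u*v - (s * (32 - 14 * sq u)) * v * v - 2*u*u - 32*s*v - 8 + 9*u*D3.
Proof.
  intros s Hs v. subst v.
  destruct u as [p1 q1]; destruct D2 as [p2 q2]; destruct D3 as [p3 q3].
  unfold Wfun, sv, sq in *; simpl in *. subst s.
  apply injective_projections; simpl; field; lra.
Qed.

Lemma sq_Cmod (z : C) : sq z = (Cmod z ^ 2)%R.
Proof. unfold sq. rewrite Cmod2_alt. reflexivity. Qed.

Lemma Cmod_minus_le (x y : C) : (Cmod (x - y) <= Cmod x + Cmod y)%R.
Proof. unfold Cminus. eapply Rle_trans. apply Cmod_triangle. rewrite Cmod_opp. lra. Qed.

Lemma Cmod_RtoC (x : R) : Cmod (RtoC x) = Rabs x.
Proof. apply Cmod_R. Qed.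

Lemma final_ineq (t r : R) : (0 <= t)%R -> (t < 1)%R -> (0 <= r)%R -> (r <= 1)%R ->
  (4*t^4 + 4*(1-t^2)*t^2*r + (1-t^2)*(32-14*t^2)*r^2 + 2*t^2 + 32*(1-t^2)*r + 8
   + 9*t*(2*(1-t^2)*(1-r^2)) <= 72)%R.
Proof.
  intros. 
  assert (H72: (72 - (4*t^4 + 4*(1-t^2)*t^2*r + (1-t^2)*(32-14*t^2)*r^2 + 2*t^2 + 32*(1-t^2)*r + 8
   + 9*t*(2*(1-t^2)*(1-r^2)))
   = 72*t^2 - 14*t^4 + (1-t^2)*((1-r)*(4*t^2+32) + (1-r^2)*(1-t)*(32+14*t)))%R) by ring.
  assert (0 <= 72*t^2 - 14*t^4)%R.
  { replace (72*t^2 - 14*t^4)%R with (t^2*(72-14*t^2))%R by ring. apply Rmult_le_pos; nra. }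
  assert (0 <= (1-r)*(4*t^2+32))%R by nra.
  assert (0 <= (1-r^2)*(1-t)*(32+14*t))%R.
  { apply Rmult_le_pos; [apply Rmult_le_pos|]; nra. }
  assert (0 <= (1-t^2)*((1-r)*(4*t^2+32) + (1-r^2)*(1-t)*(32+14*t)))%R.
  { apply Rmult_le_pos; nra. }
  lra.
Qed.

Lemma sq_ge0 z : (0 <= sq z)%R.
Proof. unfold sq. nra. Qed.

Lemma Cmod_7 (a b c d e f g : C) :
  (Cmod (a - b - c - d - e - f + g) <= Cmod a + Cmod b + Cmod c + Cmod d + Cmod e + Cmod f + Cmod g)%R.
Proof.
  eapply Rle_trans. apply Cmod_triangle. apply Rplus_le_compat_r.
  eapply Rle_trans. apply Cmod_minus_le. apply Rplus_le_compat_r.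
  eapply Rle_trans. apply Cmod_minus_le. apply Rplus_le_compat_r.
  eapply Rle_trans. apply Cmod_minus_le. apply Rplus_le_compat_r.
  eapply Rle_trans. apply Cmod_minus_le. apply Rplus_le_compat_r.
  apply Cmod_minus_le.
Qed.

Lemma alg_main (C1 C2 C3 : C) :
  (sq C1 < 4)%R ->
  (forall x0 x1 x2 x3, (0 <= Re (Tform C1 C2 C3 x0 x1 x2 x3))%R) ->
  (Cmod (Wfun C1 C2 C3) <= 2)%R.
Proof.
  intros HC1 HT.
  set (u := C1 / 2).
  assert (Hsu : (sq u = (sq C1 / 4)%R)).
  { unfold u, sq; destruct C1 as [p q]; simpl; field. }
  set (s := sv u).
  assert (Hs : ((0 < s)%R)) by (unfold s, sv; lra).
  assert (Hs0 : s <> 0%R) by lra.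
  set (D2 := C2 - 2*u*u).
  set (D3 := C3 - (2*u*u*u + 2*u*D2 - Cconj u * D2 * D2 / (2 * s))).
  assert (E1 : C1 = 2*u) by (unfold u; field).
  assert (E2 : C2 = 2*u*u + D2) by (unfold D2; ring).
  assert (E3 : C3 = 2*u*u*u + 2*u*D2 - Cconj u * D2 * D2 / (2 * s) + D3) by (unfold D3; ring).
  clearbody D3 D2. clear Hsu HC1. clearbody u. subst C1 C2 C3.
  assert (HI2 : ((sq D2 <= 4 * s * s)%R)).
  { pose proof (HT (- Cconj D2) (Cconj D2 * u - 2 * s * Cconj u) (2 * s) 0) as H.
    rewrite I2_id in H. fold s in H.
    assert (0 <= 4 * s * s - sq D2)%R; [|lra].
    apply Rmult_le_reg_l with s; lra. }
  set (N2 := (s * (s * s - sq D2 / 4))%R).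
  assert (HN2 : ((0 <= N2)%R)).
  { unfold N2. apply Rmult_le_pos; lra. }
  assert (HI3 : ((s^4 * sq D3 <= 4 * N2 * N2)%R)).
  { destruct (Req_dec N2 0) as [HN0|HNp].
    - pose proof (HT (Cconj (- D3 * Cconj (RtoC s)))
                   (Cconj (- D2 / 2 - D3 * Cconj (- s * u + D2 * Cconj u / 2)))
                   (Cconj ((- s * u + D2 * Cconj u / 2) - D3 * Cconj (- D2 / 2)))
                   (Cconj (RtoC s))) as H.
      rewrite I3_id in H by exact Hs0. fold s in H. fold N2 in H. rewrite HN0 in H.
      assert (Re (Cconj D3 * (s * s) * D3) = s * s * sq D3)%R.
      { unfold sq; destruct D3 as [p q]; simpl. ring. }
      rewrite HN0. 
      assert (0 <= s * s * sq D3)%R.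
      { apply Rmult_le_pos. nra. apply sq_ge0. }
      assert (s * s * sq D3 = 0)%R by lra.
      assert (sq D3 = 0)%R.
      { apply Rmult_integral in H2. destruct H2; [nra|auto]. }
      rewrite H3. lra.
    - assert (HNp' : (0 < N2)%R) by lra.
      set (lam := RtoC (s * s / (2 * N2)) * D3).
      pose proof (HT (Cconj (- lam * Cconj (RtoC s)))
                   (Cconj (- D2 / 2 - lam * Cconj (- s * u + D2 * Cconj u / 2)))
                   (Cconj ((- s * u + D2 * Cconj u / 2) - lam * Cconj (- D2 / 2)))
                   (Cconj (RtoC s))) as H.
      rewrite I3_id in H by exact Hs0. fold s in H. fold N2 in H.
      assert (Hl1 : (sq lam = (s * s / (2 * N2)) ^ 2 * sq D3)%R).
      { unfold lam, sq; destruct D3 as [p q]; simpl. ring. }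
      assert (Hl2 : (Re (Cconj lam * (s * s) * D3) = (s * s / (2 * N2)) * (s * s) * sq D3)%R).
      { unfold lam, sq; destruct D3 as [p q]; simpl. ring. }
      rewrite Hl1, Hl2 in H.
      assert (0 <= N2 - s^4 * sq D3 / (4 * N2))%R.
      { replace (N2 - s^4 * sq D3 / (4 * N2))%R with
          (N2 * (1 + (s * s / (2 * N2)) ^ 2 * sq D3) - s * s / (2 * N2) * (s * s) * sq D3)%R
          by (field; lra). exact H. }
      assert (0 <= 4 * N2 * (N2 - s^4 * sq D3 / (4 * N2)))%R.
      { apply Rmult_le_pos; lra. }
      replace (4 * N2 * (N2 - s ^ 4 * sq D3 / (4 * N2)))%R with (4 * N2 * N2 - s^4 * sq D3)%R
        in H1 by (field; lra).
      lra. }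
  set (v := D2 / (2 * s)).
  assert (Hv : (sq v = (sq D2 / (4 * s * s))%R)).
  { unfold v, sq; destruct D2 as [p q]; simpl. field. lra. }
  set (rho := Cmod v).
  set (t := Cmod u).
  set (e := Cmod D3).
  assert (Hrho0 : ((0 <= rho)%R)) by apply Cmod_ge_0.
  assert (Ht0 : ((0 <= t)%R)) by apply Cmod_ge_0.
  assert (He0 : ((0 <= e)%R)) by apply Cmod_ge_0.
  assert (Hrho2 : ((rho ^ 2 = sq v)%R)) by (unfold rho; rewrite sq_Cmod; reflexivity).
  assert (Ht2 : ((t ^ 2 = sq u)%R)) by (unfold t; rewrite sq_Cmod; reflexivity).
  assert (He2 : ((e ^ 2 = sq D3)%R)) by (unfold e; rewrite sq_Cmod; reflexivity).
  assert (Hst : (s = (1 - t^2)%R)) by (unfold s, sv; rewrite Ht2; reflexivity).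
  assert (Hrho1 : ((rho <= 1)%R)).
  { assert (sq v <= 1)%R.
    { rewrite Hv. apply Rmult_le_reg_r with (4 * s * s)%R. nra.
      field_simplify; try lra. }
    nra. }
  assert (Ht1 : ((t < 1)%R)) by nra.
  assert (HN2' : N2 = (s^3 * (1 - rho^2))%R).
  { unfold N2. rewrite Hrho2, Hv. field. lra. }
  assert (He : ((e <= 2 * s * (1 - rho^2))%R)).
  { assert (e^2 <= (2 * s * (1 - rho^2))^2)%R.
    { rewrite He2. apply Rmult_le_reg_l with (s^4)%R. 
      apply pow_lt; lra. rewrite HN2' in HI3. nra. }
    assert (0 <= 2 * s * (1 - rho^2))%R.
    { apply Rmult_le_pos; nra. }
    nra. }
  assert (HW : 36 * Wfun (2*u) (2*u*u + D2) (2*u*u*u + 2*u*D2 - Cconj u * D2 * D2 / (2 * s) + D3)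
    = 4*u*u*u*u - 4*s*u*u*v - (s * (32 - 14 * sq u)) * v * v - 2*u*u - 32*s*v - 8 + 9*u*D3).
  { apply W_id. exact Hs0. }
  assert (Hb : ((Cmod (36 * Wfun (2*u) (2*u*u + D2) (2*u*u*u + 2*u*D2 - Cconj u * D2 * D2 / (2 * s) + D3)) <= 72)%R)).
  { rewrite HW.
    eapply Rle_trans. apply Cmod_7.
    rewrite !Cmod_mult, !Cmod_RtoC.
    fold t rho e.
    rewrite (Rabs_pos_eq s) by lra.
    assert (Hc : (32 - 14 * RtoC (sq u))%C = RtoC (32 - 14 * sq u)%R).
    { apply injective_projections; simpl; ring. }
    rewrite Hc, Cmod_RtoC.
    rewrite (Rabs_pos_eq (32 - 14 * sq u)) by (rewrite <- Ht2; nra).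
    rewrite !(Rabs_pos_eq 4), !(Rabs_pos_eq 2), !(Rabs_pos_eq 32), !(Rabs_pos_eq 8), !(Rabs_pos_eq 9) by lra.
    rewrite <- Ht2. rewrite Hst.
    pose proof (final_ineq t rho Ht0 Ht1 Hrho0 Hrho1).
    assert (9 * t * e <= 9 * t * (2 * (1 - t ^ 2) * (1 - rho ^ 2)))%R.
    { rewrite <- Hst. apply Rmult_le_compat_l; nra. }
    nra. }
  rewrite Cmod_mult in Hb. rewrite Cmod_RtoC in Hb.
  rewrite Rabs_pos_eq in Hb by lra. lra.
Qed.

Lemma Re_RtoC_mult (c : R) (z : C) : Re (RtoC c * z) = (c * Re z)%R.
Proof. destruct z; simpl. ring. Qed.

Lemma csum_re_lb (f : nat -> C) (B : R) N :
  (forall m, (m < N)%nat -> (- B <= Re (f m))%R) -> (- (INR N * B) <= Re (csum f N))%R.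
Proof.
  induction N; intros H.
  - simpl. lra.
  - simpl csum. rewrite S_INR. 
    assert (Re (csum f N + f N) = Re (csum f N) + Re (f N))%R by reflexivity.
    rewrite H0. specialize (IHN (fun m Hm => H m ltac:(lia))). specialize (H N ltac:(lia)). lra.
Qed.

Lemma Cmod_5 (a b c d e : C) : (Cmod (a + b + c + d + e) <= Cmod a + Cmod b + Cmod c + Cmod d + Cmod e)%R.
Proof.
  eapply Rle_trans. apply Cmod_triangle. apply Rplus_le_compat_r.
  eapply Rle_trans. apply Cmod_triangle. apply Rplus_le_compat_r.
  eapply Rle_trans. apply Cmod_triangle. apply Rplus_le_compat_r.
  apply Cmod_triangle.
Qed.

Lemma Pv_bound (x : nat -> C) (w : C) : Cmod w = 1%R ->
  (Cmod (Pv x w) <= Cmod (x 0%nat) + Cmod (x 1%nat) + Cmod (x 2%nat) + Cmod (x 3%nat))%R.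
Proof.
  intros Hw. unfold Pv. simpl csum.
  eapply Rle_trans. apply Cmod_5.
  rewrite ?Cmod_mult, ?Hw, ?Cmod_1, ?Cmod_0. lra.
Qed.

Lemma PconjP (P : C) : P * Cconj P = RtoC (Cmod P ^ 2).
Proof. rewrite Cmod2_conj. reflexivity. Qed.

Definition e2 (b : nat -> C) (n : nat) : C :=
  match n with O => 0 | S O => 0 | S (S k) => b k end.

Lemma ppoly_shift2 b M z : z * z * ppoly b M z = ppoly (e2 b) (M + 2) z.
Proof.
  induction M.
  - unfold ppoly. simpl. ring.
  - replace (S M + 2)%nat with (S (M + 2)) by lia.
    unfold ppoly in *. simpl csum. rewrite <- IHM.
    replace (M + 2)%nat with (S (S M)) by lia. simpl e2. simpl Cpow. ring.
Qed.

Lemma eps_le (y : R) : (forall eps, (0 < eps)%R -> (- eps <= y)%R) -> (0 <= y)%R.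
Proof.
  intros H. apply Rnot_lt_le. intros Hy. specialize (H (- y / 2)%R ltac:(lra)). lra.
Qed.

Lemma toeplitz f f' a (r : R) x0 x1 x2 x3 :
  class_F2 f f' a -> (0 < r < 1)%R ->
  (0 <= Re (Tform ((2 * a 2%nat) * RtoC r) ((3 * a 3%nat - 1) * RtoC r ^ 2)
              ((4 * a 4%nat - 2 * a 2%nat) * RtoC r ^ 3) x0 x1 x2 x3))%R.
Proof.
  intros [HA [HD Hpos]] Hr.
  pose proof HA as HA'. destruct HA' as [Ha0 [Ha1 _]].
  destruct (deriv_approx f f' a r HA HD ltac:(lra)) as [K [q [M0 [HK [Hq Happ]]]]].
  set (x := fun k : nat => match k with 0 => x0 | 1 => x1 | 2 => x2 | _ => x3 end).
  set (X := (Cmod (x 0%nat) + Cmod (x 1%nat) + Cmod (x 2%nat) + Cmod (x 3%nat))%R).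
  assert (HX : (0 <= X)%R).
  { unfold X. pose proof (Cmod_ge_0 (x 0%nat)). pose proof (Cmod_ge_0 (x 1%nat)).
    pose proof (Cmod_ge_0 (x 2%nat)). pose proof (Cmod_ge_0 (x 3%nat)). lra. }
  apply eps_le. intros eps Heps.
  set (y := (eps / (2 * (K + 1) * (X * X + 1)))%R).
  assert (Hy : (0 < y)%R).
  { unfold y. apply Rdiv_lt_0_compat; auto. apply Rmult_lt_0_compat; nra. }
  destruct (pow_lt_1_zero q ltac:(rewrite Rabs_pos_eq; lra) y Hy) as [N1 HN1].
  set (M := (M0 + N1 + 4)%nat).
  assert (HqM : (q ^ M < y)%R).
  { specialize (HN1 M ltac:(unfold M; lia)). rewrite Rabs_pos_eq in HN1; auto. apply pow_le; lra. }
  assert (HqM0 : (0 <= q ^ M)%R) by (apply pow_le; lra).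
  set (N := (M + 6)%nat).
  set (b := dcoef a).
  set (err := (2 * K * q ^ M * (X * X))%R).
  assert (Herr : (err <= eps)%R).
  { unfold err.
    assert (2 * K * q ^ M * (X * X) <= 2 * (K + 1) * (X * X + 1) * q ^ M)%R.
    { assert (0 <= 2 * q ^ M)%R by lra. 
      assert (2 * K * q ^ M * (X * X) = (2 * q ^ M) * (K * (X * X)))%R by ring.
      assert (2 * (K + 1) * (X * X + 1) * q ^ M = (2 * q ^ M) * ((K + 1) * (X * X + 1)))%R by ring.
      rewrite H0, H1. apply Rmult_le_compat_l; auto. nra. }
    assert (2 * (K + 1) * (X * X + 1) * q ^ M <= 2 * (K + 1) * (X * X + 1) * y)%R.
    { apply Rmult_le_compat_l. nra. lra. }
    unfold y in H0. replace (2 * (K + 1) * (X * X + 1) * (eps / (2 * (K + 1) * (X * X + 1))))%R with eps in H0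
      by (field; nra). lra. }
  set (qq := fun z => ppoly b M z - ppoly (e2 b) (M + 2) z).
  set (term := fun m => qq (RtoC r * om N ^ m) * Pv x (om N ^ m) * Cconj (Pv x (om N ^ m))).
  assert (Hterm : forall m, (m < N)%nat -> (- err <= Re (term m))%R).
  { intros m Hm.
    set (w := om N ^ m).
    assert (Hw1 : Cmod w = 1%R).
    { unfold w. rewrite Cmod_pow, Cmod_om by (unfold N; lia). apply pow1. }
    set (z := RtoC r * w).
    assert (Hz : Cmod z = r).
    { unfold z. rewrite Cmod_mult, Hw1, Cmod_R, Rabs_pos_eq; lra. }
    assert (Hzd : in_disk z) by (unfold in_disk; lra).
    assert (Hqq : qq z = (1 - z * z) * ppoly b M z).
    { unfold qq. rewrite <- ppoly_shift2. ring. }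
    pose proof (Happ M z ltac:(unfold M; lia) ltac:(lra)) as Hap. fold b in Hap.
    pose proof (Hpos z Hzd) as Hp.
    set (P := Pv x w).
    assert (HP : (Cmod P <= X)%R) by (apply Pv_bound; exact Hw1).
    unfold term. fold w. fold z. fold P.
    replace (qq z * P * Cconj P) with (qq z * RtoC (Cmod P ^ 2)) by (rewrite <- PconjP; ring).
    assert (HRe : Re (qq z * RtoC (Cmod P ^ 2)) = (Re (qq z) * Cmod P ^ 2)%R).
    { destruct (qq z); simpl. ring. }
    rewrite HRe.
    assert (Hd : qq z = (1 - z * z) * f' z - (1 - z * z) * (f' z - ppoly b M z)) by (rewrite Hqq; ring).
    assert (H1zz : (Cmod (1 - z * z) <= 2)%R).
    { eapply Rle_trans. apply Cmod_sub_le. rewrite Cmod_1, Cmod_mult, Hz. nra. }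
    assert (HE : (Cmod ((1 - z * z) * (f' z - ppoly b M z)) <= 2 * (K * q ^ M))%R).
    { rewrite Cmod_mult. apply Rmult_le_compat; auto using Cmod_ge_0. }
    assert (HReq : (- (2 * (K * q ^ M)) <= Re (qq z))%R).
    { rewrite Hd. 
      assert (Re ((1 - z * z) * f' z - (1 - z * z) * (f' z - ppoly b M z)) =
              Re ((1 - z * z) * f' z) - Re ((1 - z * z) * (f' z - ppoly b M z)))%R by reflexivity.
      rewrite H. pose proof (re_le_Cmod ((1 - z * z) * (f' z - ppoly b M z))).
      pose proof (Rle_abs (Re ((1 - z * z) * (f' z - ppoly b M z)))). lra. }
    assert (HP2 : (Cmod P ^ 2 <= X * X)%R).
    { pose proof (Cmod_ge_0 P). simpl. nra. }
    assert (HP0 : (0 <= Cmod P ^ 2)%R) by (apply pow2_ge_0).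
    unfold err.
    assert (0 <= K * q ^ M)%R by (apply Rmult_le_pos; lra).
    nra. }
  pose proof (csum_re_lb term err N Hterm) as Hsum.
  assert (Hcs : csum term N = RtoC (INR N) * Tform ((2 * a 2%nat) * RtoC r) ((3 * a 3%nat - 1) * RtoC r ^ 2)
              ((4 * a 4%nat - 2 * a 2%nat) * RtoC r ^ 3) x0 x1 x2 x3).
  { unfold term, qq.
    rewrite (csum_ext _ (fun m => ppoly b M (RtoC r * om N ^ m) * Pv x (om N ^ m) * Cconj (Pv x (om N ^ m))
                                 - ppoly (e2 b) (M + 2) (RtoC r * om N ^ m) * Pv x (om N ^ m) * Cconj (Pv x (om N ^ m)))).
    2:{ intros. ring. }
    rewrite csum_minus.
    rewrite !fourier_form by (unfold N, M; lia).
    unfold Tform, TformG, b, dcoef, e2. rewrite Ha1. simpl. unfold x. rewrite ?RtoC_plus. ring. }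
  rewrite Hcs in Hsum. rewrite Re_RtoC_mult in Hsum.
  assert (HN : (0 < INR N)%R) by (apply lt_0_INR; unfold N; lia).
  assert (- err <= Re (Tform (2 * a 2%nat * RtoC r) ((3 * a 3%nat - 1) * RtoC r ^ 2)
                       ((4 * a 4%nat - 2 * a 2%nat) * RtoC r ^ 3) x0 x1 x2 x3))%R.
  { apply (Rmult_le_reg_l (INR N)); auto. lra. }
  lra.
Qed.

Lemma sq_mult_R (c : C) (r : R) : sq (c * RtoC r) = (sq c * r ^ 2)%R.
Proof. unfold sq. destruct c; simpl. ring. Qed.

Lemma I1_from (C1 C2 C3 : C) :
  (forall x0 x1 x2 x3, (0 <= Re (Tform C1 C2 C3 x0 x1 x2 x3))%R) -> (sq C1 <= 4)%R.
Proof.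
  intros H. pose proof (H (- Cconj C1 / 2) 1 0 0) as H1. rewrite I1_id in H1.
  unfold sq. lra.
Qed.

Lemma W_scale (c1 c2 c3 : C) (r : R) :
  Wfun (c1 * RtoC r) (c2 * RtoC r ^ 2) (c3 * RtoC r ^ 3)
  = RtoC (- 2 / 9) + (5 * c1 * c1 / 24 - 4 * c2 / 9) * RtoC (r ^ 2)
    + (c1 * c3 / 8 + c1 * c1 * c2 / 12 - 2 * c2 * c2 / 9 - c1 * c1 * c1 * c1 / 96) * RtoC (r ^ 4).
Proof.
  unfold Wfun. rewrite <- !RtoC_pow. apply injective_projections; destruct c1, c2, c3; simpl; field.
Qed.

Lemma limit_W (c1 c2 c3 : C) :
  (forall r, (0 < r < 1)%R -> (Cmod (Wfun (c1 * RtoC r) (c2 * RtoC r ^ 2) (c3 * RtoC r ^ 3)) <= 2)%R) ->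
  (Cmod (Wfun c1 c2 c3) <= 2)%R.
Proof.
  intros H.
  set (W2 := 5 * c1 * c1 / 24 - 4 * c2 / 9).
  set (W4 := c1 * c3 / 8 + c1 * c1 * c2 / 12 - 2 * c2 * c2 / 9 - c1 * c1 * c1 * c1 / 96).
  assert (H1 : Wfun c1 c2 c3 = RtoC (- 2 / 9) + W2 * RtoC (1 ^ 2) + W4 * RtoC (1 ^ 4)).
  { unfold W2, W4, Wfun. apply injective_projections; destruct c1, c2, c3; simpl; field. }
  set (Kc := (Cmod W2 + Cmod W4)%R).
  assert (HKc : (0 <= Kc)%R) by (unfold Kc; pose proof (Cmod_ge_0 W2); pose proof (Cmod_ge_0 W4); lra).
  assert (Hb : forall r, (0 < r < 1)%R -> (Cmod (Wfun c1 c2 c3) <= 2 + 4 * Kc * (1 - r))%R).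
  { intros r Hr. specialize (H r Hr). rewrite W_scale in H. fold W2 W4 in H.
    rewrite H1.
    replace (RtoC (- 2 / 9) + W2 * RtoC (1 ^ 2) + W4 * RtoC (1 ^ 4)) with
      ((RtoC (- 2 / 9) + W2 * RtoC (r ^ 2) + W4 * RtoC (r ^ 4)) + (W2 * RtoC (1 - r ^ 2) + W4 * RtoC (1 - r ^ 4)))
      by (rewrite !RtoC_minus, !RtoC_pow; ring).
    eapply Rle_trans. apply Cmod_triangle.
    eapply Rle_trans. apply Rplus_le_compat_l. apply Cmod_triangle.
    rewrite !Cmod_mult, !Cmod_R.
    assert (Hr2 : (0 <= 1 - r ^ 2 <= 2 * (1 - r))%R) by (simpl; nra).
    assert (Hr4 : (0 <= 1 - r ^ 4 <= 4 * (1 - r))%R).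
    { replace (r ^ 4)%R with (r ^ 2 * r ^ 2)%R by ring. simpl. 
      assert (0 < r * r < 1)%R by nra. split; nra. }
    rewrite (Rabs_pos_eq (1 - r ^ 2)) by lra. rewrite (Rabs_pos_eq (1 - r ^ 4)) by lra.
    pose proof (Cmod_ge_0 W2). pose proof (Cmod_ge_0 W4).
    assert (Cmod W2 * (1 - r ^ 2) <= Cmod W2 * (2 * (1 - r)))%R by (apply Rmult_le_compat_l; lra).
    assert (Cmod W4 * (1 - r ^ 4) <= Cmod W4 * (4 * (1 - r)))%R by (apply Rmult_le_compat_l; lra).
    unfold Kc. nra. }
  apply Rnot_lt_le. intros Hlt.
  set (d := (Cmod (Wfun c1 c2 c3) - 2)%R).
  assert (Hd : (0 < d)%R) by (unfold d; lra).
  set (t := Rmin (1/2) (d / (8 * (Kc + 1)))).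
  assert (Ht : (0 < t <= 1/2)%R).
  { unfold t. split. apply Rmin_case; [lra|]. apply Rdiv_lt_0_compat; lra. apply Rmin_l. }
  assert (Ht2 : (t <= d / (8 * (Kc + 1)))%R) by apply Rmin_r.
  specialize (Hb (1 - t)%R ltac:(lra)).
  replace (1 - (1 - t))%R with t in Hb by ring.
  assert (4 * Kc * t <= 4 * Kc * (d / (8 * (Kc + 1))))%R by (apply Rmult_le_compat_l; lra).
  assert (4 * Kc * (d / (8 * (Kc + 1))) < d)%R.
  { apply (Rmult_lt_reg_r (8 * (Kc + 1))). lra.
    replace (4 * Kc * (d / (8 * (Kc + 1))) * (8 * (Kc + 1)))%R with (4 * Kc * d)%R by (field; lra).
    nra. }
  unfold d in *. lra.
Qed.

Lemma H21_W (a : nat -> C) : a 1%nat = 1 ->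
  H21 a = Wfun (2 * a 2%nat) (3 * a 3%nat - 1) (4 * a 4%nat - 2 * a 2%nat) / 8.
Proof.
  intros Ha1. unfold H21, gamma1, gamma2, gamma3, Wfun. simpl Cpow.
  field.
Qed.

Lemma part1 (f f' : C -> C) (a : nat -> C) : class_F2 f f' a -> (Cmod (H21 a) <= / 4)%R.
Proof.
  intros HF.
  pose proof HF as [[Ha0 [Ha1 _]] _].
  set (c1 := 2 * a 2%nat). set (c2 := 3 * a 3%nat - 1). set (c3 := 4 * a 4%nat - 2 * a 2%nat).
  assert (HT : forall r, (0 < r < 1)%R -> forall x0 x1 x2 x3,
     (0 <= Re (Tform (c1 * RtoC r) (c2 * RtoC r ^ 2) (c3 * RtoC r ^ 3) x0 x1 x2 x3))%R).
  { intros r Hr x0 x1 x2 x3. apply (toeplitz f f' a r x0 x1 x2 x3 HF Hr). }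
  assert (Hc1 : (sq c1 <= 4)%R).
  { apply Rnot_lt_le. intros Hlt.
    set (S0 := sq c1).
    assert (HS : (4 < S0)%R) by exact Hlt.
    set (rr := (1 - (S0 - 4) / (4 * S0))%R).
    assert (Hrr : (0 < rr < 1)%R).
    { unfold rr. split.
      - assert ((S0 - 4) / (4 * S0) < 1)%R.
        { apply (Rmult_lt_reg_r (4 * S0)). lra. replace ((S0 - 4) / (4 * S0) * (4 * S0))%R with (S0 - 4)%R by (field; lra). lra. }
        lra.
      - assert (0 < (S0 - 4) / (4 * S0))%R by (apply Rdiv_lt_0_compat; lra). lra. }
    pose proof (I1_from _ _ _ (HT rr Hrr)) as H.
    rewrite sq_mult_R in H. fold S0 in H.
    assert (rr ^ 2 * S0 > 4)%R.
    { assert (rr ^ 2 >= 1 - 2 * ((S0 - 4) / (4 * S0)))%R.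
      { unfold rr. simpl. set (u := ((S0 - 4) / (4 * S0))%R). nra. }
      assert ((1 - 2 * ((S0 - 4) / (4 * S0))) * S0 = (S0 + 4) / 2)%R by (field; lra).
      nra. }
    lra. }
  assert (HW : (Cmod (Wfun c1 c2 c3) <= 2)%R).
  { apply limit_W. intros r Hr. apply alg_main.
    - rewrite sq_mult_R. 
      destruct (Req_dec (sq c1) 0) as [E|E]. rewrite E. lra.
      assert (0 <= sq c1)%R by apply sq_ge0.
      assert (r ^ 2 < 1)%R by (simpl; nra). nra.
    - apply HT; exact Hr. }
  rewrite H21_W by exact Ha1. fold c1 c2 c3.
  unfold Cdiv. rewrite Cmod_mult.
  replace (Cmod (/ 8)) with (/ 8)%R.
  replace (/ 4)%R with (2 * / 8)%R by field.
  apply Rmult_le_compat_r; [apply Rlt_le, Rinv_0_lt_compat; lra | exact HW].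
  rewrite Cmod_inv. rewrite Cmod_R, Rabs_pos_eq; lra.
  intro E. apply (f_equal fst) in E. simpl in E. lra.
Qed.

Lemma Cmult_reg_l' (c x y : C) : c <> 0 -> c * x = c * y -> x = y.
Proof.
  intros Hc H. replace x with (/ c * (c * x)) by (field; auto). rewrite H. field. auto.
Qed.

Lemma csum_S f n : csum f (S n) = csum f n + f n.
Proof. reflexivity. Qed.

Lemma odd_2k k : Nat.odd (2 * k) = false.
Proof. induction k. reflexivity. replace (2 * S k)%nat with (S (S (2 * k))) by lia. exact IHk. Qed.

Lemma odd_2k1 k : Nat.odd (2 * k + 1) = true.
Proof. induction k. reflexivity. replace (2 * S k + 1)%nat with (S (S (2 * k + 1))) by lia. exact IHk. Qed.

Lemma ext_partial (z : C) k :
  (1 - z * z) * csum (fun n => a_ext n * z ^ n) (2 * k) = z - z ^ (2 * k + 1) /\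
  csum (fun n => a_ext n * z ^ n) (2 * k + 1) = csum (fun n => a_ext n * z ^ n) (2 * k).
Proof.
  induction k.
  - simpl. split. ring. unfold a_ext. simpl. ring.
  - destruct IHk as [H1 H2].
    assert (E1 : csum (fun n => a_ext n * z ^ n) (2 * S k) =
                 csum (fun n => a_ext n * z ^ n) (2 * k) + z ^ (2 * k + 1)).
    { replace (2 * S k)%nat with (S (2 * k + 1)) by lia. rewrite csum_S. rewrite H2.
      unfold a_ext at 2. rewrite odd_2k1. ring. }
    split.
    + rewrite E1. rewrite Cmult_plus_distr_l, H1.
      replace (2 * S k + 1)%nat with (2 + (2 * k + 1))%nat by lia. rewrite (Cpow_add_r z 2 (2 * k + 1)). replace (z ^ 2) with (z * z) by (simpl; ring). ring.
    + replace (2 * S k + 1)%nat with (S (2 * S k)) by lia. rewrite csum_S.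
      unfold a_ext at 2. rewrite odd_2k. ring.
Qed.

Lemma one_minus_zz_ne (z : C) : (Cmod z < 1)%R -> 1 - z * z <> 0.
Proof.
  intros Hz E.
  assert (z * z = 1) by (replace (z * z) with (1 - (1 - z * z)) by ring; rewrite E; ring).
  apply (f_equal Cmod) in H. rewrite Cmod_mult, Cmod_1 in H.
  pose proof (Cmod_ge_0 z). nra.
Qed.

Lemma Cmod_one_minus_zz (z : C) : (Cmod z < 1)%R -> (1 - Cmod z ^ 2 <= Cmod (1 - z * z))%R.
Proof.
  intros Hz.
  pose proof (Cmod_triangle (1 - z * z) (z * z)).
  replace (1 - z * z + z * z) with (RtoC 1) in H by ring.
  rewrite Cmod_1, Cmod_mult in H. simpl. lra.
Qed.

Lemma ext_series (z : C) : in_disk z ->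
  @is_series C_AbsRing C_NormedModule (fun n => a_ext n * z ^ n) (f_ext z).
Proof.
  intros Hz. unfold in_disk in Hz.
  pose proof (Cmod_ge_0 z) as Hz0.
  assert (Hnz : 1 - z * z <> 0) by (apply one_minus_zz_ne; exact Hz).
  assert (Hd : (0 < 1 - Cmod z ^ 2)%R) by (simpl; nra).
  assert (Hbound : forall n, (Cmod (csum (fun k => a_ext k * z ^ k) n - f_ext z)%C <= Cmod z ^ n / (1 - Cmod z ^ 2))%R).
  { intros n. destruct (Nat.Even_or_Odd n) as [[k Hk]|[k Hk]].
    - destruct (ext_partial z k) as [H1 _]. subst n.
      assert (E : csum (fun k0 => a_ext k0 * z ^ k0) (2 * k) - f_ext z = - (z ^ (2 * k + 1)) / (1 - z * z)).
      { unfold f_ext. apply (Cmult_reg_l' (1 - z * z)); auto.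
        replace ((1 - z * z) * (csum (fun k0 => a_ext k0 * z ^ k0) (2 * k) - z / (1 - z * z)))
          with ((1 - z * z) * csum (fun k0 => a_ext k0 * z ^ k0) (2 * k) - z) by (field; auto).
        rewrite H1. field. auto. }
      rewrite E. unfold Cdiv. rewrite Cmod_mult, Cmod_opp, Cmod_inv by auto. rewrite Cmod_pow.
      pose proof (Cmod_one_minus_zz z Hz).
      assert (Cmod z ^ (2 * k + 1) <= Cmod z ^ (2 * k))%R.
      { rewrite pow_add, pow_1. pose proof (pow_le (Cmod z) (2 * k) Hz0). nra. }
      apply Rmult_le_compat; auto. apply pow_le; auto. apply Rlt_le, Rinv_0_lt_compat; lra.
      apply Rinv_le_contravar; lra.
    - destruct (ext_partial z k) as [H1 H2]. subst n. rewrite H2.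
      assert (E : csum (fun k0 => a_ext k0 * z ^ k0) (2 * k) - f_ext z = - (z ^ (2 * k + 1)) / (1 - z * z)).
      { unfold f_ext. apply (Cmult_reg_l' (1 - z * z)); auto.
        replace ((1 - z * z) * (csum (fun k0 => a_ext k0 * z ^ k0) (2 * k) - z / (1 - z * z)))
          with ((1 - z * z) * csum (fun k0 => a_ext k0 * z ^ k0) (2 * k) - z) by (field; auto).
        rewrite H1. field. auto. }
      rewrite E. unfold Cdiv. rewrite Cmod_mult, Cmod_opp, Cmod_inv by auto. rewrite Cmod_pow.
      pose proof (Cmod_one_minus_zz z Hz).
      apply Rmult_le_compat; auto. apply pow_le; auto. apply Rlt_le, Rinv_0_lt_compat; lra. lra.
      apply Rinv_le_contravar; lra. }
  apply filterlim_locally. intros eps.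
  assert (Hy : (0 < eps * (1 - Cmod z ^ 2))%R) by (apply Rmult_lt_0_compat; auto; apply cond_pos).
  destruct (pow_lt_1_zero (Cmod z) ltac:(rewrite Rabs_pos_eq; lra) _ Hy) as [N1 HN1].
  exists N1. intros N HN. apply ball_C.
  rewrite sum_n_csum. eapply Rle_lt_trans. apply Hbound.
  specialize (HN1 (S N) ltac:(lia)). rewrite Rabs_pos_eq in HN1 by (apply pow_le; lra).
  apply (Rmult_lt_reg_r (1 - Cmod z ^ 2)); auto.
  unfold Rdiv. rewrite Rmult_assoc, Rinv_l by lra. lra.
Qed.

Lemma deriv_by_bound (f : C -> C) x l (dlt K : R) :
  (0 < dlt)%R -> (0 <= K)%R ->
  (forall y, (Cmod (y - x) < dlt)%R -> (Cmod (f y - f x - (y - x) * l) <= K * Cmod (y - x) ^ 2)%R) ->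
  @is_derive C_AbsRing C_NormedModule f x l.
Proof.
  intros Hd HK H. split.
  - apply (is_linear_scal_l (K := C_AbsRing) (V := C_NormedModule)).
  - intros x' Hx'.
    apply (is_filter_lim_locally_unique (K := C_AbsRing) (V := AbsRing_NormedModule C_AbsRing)) in Hx'.
    subst x'.
    intros eps.
    assert (Hr : (0 < Rmin dlt (eps / (K + 1)))%R).
    { apply Rmin_case; auto. apply Rdiv_lt_0_compat. apply cond_pos. lra. }
    exists (mkposreal _ Hr). intros y Hy.
    change (Cmod (y - x) < Rmin dlt (eps / (K + 1)))%R in Hy.
    change (Cmod (f y - f x - (y - x) * l) <= eps * Cmod (y - x))%R.
    assert (H1 : (Cmod (y - x) < dlt)%R) by (pose proof (Rmin_l dlt (eps / (K + 1))); lra).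
    assert (H2 : (Cmod (y - x) <= eps / (K + 1))%R) by (pose proof (Rmin_r dlt (eps / (K + 1))); lra).
    eapply Rle_trans. apply H. exact H1.
    pose proof (Cmod_ge_0 (y - x)).
    assert (K * Cmod (y - x) <= eps)%R.
    { apply Rle_trans with (K * (eps / (K + 1)))%R. apply Rmult_le_compat_l; auto.
      apply (Rmult_le_reg_r (K + 1)). lra.
      replace (K * (eps / (K + 1)) * (K + 1))%R with (K * eps)%R by (field; lra).
      pose proof (cond_pos eps). nra. }
    simpl. nra.
Qed.

Lemma deriv_inv (x : C) : x <> 0 ->
  @is_derive C_AbsRing C_NormedModule (fun y => / y) x (- / (x * x)).
Proof.
  intros Hx.
  assert (Hm : (0 < Cmod x)%R) by (apply Cmod_gt_0; auto).
  apply (deriv_by_bound _ x _ (Cmod x / 2) (2 / Cmod x ^ 3)).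
  lra. apply Rlt_le, Rdiv_lt_0_compat; [lra| apply pow_lt; lra].
  intros y Hy.
  assert (Hy2 : (Cmod x / 2 <= Cmod y)%R).
  { pose proof (Cmod_triangle (x - y) y). replace (x - y + y) with x in H by ring.
    rewrite <- Cmod_opp in Hy. replace (- (y - x)) with (x - y) in Hy by ring. lra. }
  assert (Hy0 : y <> 0).
  { intro E. rewrite E, Cmod_0 in Hy2. lra. }
  replace (/ y - / x - (y - x) * - / (x * x)) with ((y - x) * (y - x) * / (x * x * y)) by (field; auto).
  rewrite !Cmod_mult, Cmod_inv by (apply Cmult_neq_0; auto; apply Cmult_neq_0; auto).
  rewrite !Cmod_mult.
  assert (Hy1 : (0 < Cmod y)%R) by lra.
  apply (Rmult_le_reg_r (Cmod x * Cmod x * Cmod y)). apply Rmult_lt_0_compat; [nra|lra].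
  replace (Cmod (y - x) * Cmod (y - x) * / (Cmod x * Cmod x * Cmod y) * (Cmod x * Cmod x * Cmod y))%R
    with (Cmod (y - x) * Cmod (y - x))%R by (field; lra).
  replace (2 / Cmod x ^ 3 * Cmod (y - x) ^ 2 * (Cmod x * Cmod x * Cmod y))%R
    with ((Cmod (y - x) * Cmod (y - x)) * (2 * Cmod y / Cmod x))%R by (simpl; field; lra).
  pose proof (Cmod_ge_0 (y - x)).
  assert (1 <= 2 * Cmod y / Cmod x)%R.
  { apply (Rmult_le_reg_r (Cmod x)); auto. replace (2 * Cmod y / Cmod x * Cmod x)%R with (2 * Cmod y)%R by (field; lra). lra. }
  nra.
Qed.

Lemma conv_der2 (f : C -> C) x l :
  @is_derive C_AbsRing C_NormedModule f x l -> @is_derive C_AbsRing (AbsRing_NormedModule C_AbsRing) f x l.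
Proof. intros [H1 H2]. split.
 - destruct H1 as [A B [M [HM HM2]]]. split. exact A. exact B. exists M. split. exact HM. exact HM2.
 - intros y Hy. exact (H2 y Hy).
Qed.

Definition fext' (z : C) : C := (1 + z * z) / ((1 - z * z) * (1 - z * z)).

Lemma ext_deriv (z : C) : in_disk z -> @is_derive C_AbsRing C_NormedModule f_ext z (fext' z).
Proof.
  intros Hz. unfold in_disk in Hz.
  assert (Hnz : 1 - z * z <> 0) by (apply one_minus_zz_ne; auto).
  apply conv_der.
  assert (Hg : @is_derive C_AbsRing (AbsRing_NormedModule C_AbsRing) (fun w : C => 1 - w * w) z (- (2 * z))).
  { eapply is_derive_eqA.
    eapply is_derive_ext. 2: apply (is_derive_minus (K := C_AbsRing) (V := AbsRing_NormedModule C_AbsRing)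
        (fun _ => one) (fun w => mult w w)).
    intros t. reflexivity.
    apply (is_derive_const (K := C_AbsRing)).
    apply (is_derive_mult (K := C_AbsRing)); [apply (is_derive_id (K := C_AbsRing))|apply (is_derive_id (K := C_AbsRing))|].
    intros; apply Cmult_comm.
    change (0 - (1 * z + z * 1) = - (2 * z)). ring. }
  assert (Hi : @is_derive C_AbsRing (AbsRing_NormedModule C_AbsRing) (fun w : C => / (1 - w * w)) z
                 ((- (2 * z)) * (- / ((1 - z * z) * (1 - z * z))))).
  { apply (is_derive_comp (K := C_AbsRing) (V := AbsRing_NormedModule C_AbsRing) (fun y => / y) (fun w => 1 - w * w)).
    apply conv_der2. apply deriv_inv. exact Hnz. exact Hg. }
  eapply is_derive_eqA.
  eapply is_derive_ext. 2: apply (is_derive_mult (K := C_AbsRing) (fun w => w) (fun w => / (1 - w * w))).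
  intros t. unfold f_ext. reflexivity.
  apply (is_derive_id (K := C_AbsRing)). exact Hi.
  intros; apply Cmult_comm.
  change (1 * / (1 - z * z) + z * ((- (2 * z)) * (- / ((1 - z * z) * (1 - z * z)))) = fext' z).
  unfold fext'. field. auto.
Qed.

Lemma ext_pos (z : C) : in_disk z -> (0 < Re ((1 - z * z) * fext' z))%R.
Proof.
  intros Hz. unfold in_disk in Hz.
  assert (Hnz : 1 - z * z <> 0) by (apply one_minus_zz_ne; auto).
  assert (E : (1 - z * z) * fext' z = (1 + z * z) / (1 - z * z)) by (unfold fext'; field; auto).
  rewrite E.
  assert (Hw : (Cmod (z * z) < 1)%R) by (rewrite Cmod_mult; pose proof (Cmod_ge_0 z); nra).
  set (w := z * z) in *. clearbody w.
  assert (Hw2 : (sq w < 1)%R) by (rewrite sq_Cmod; pose proof (Cmod_ge_0 w); simpl; nra).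
  destruct w as [p q]. unfold sq in Hw2. simpl in Hw2.
  assert (Hden : (0 < (1 - p) * (1 - p) + q * q)%R).
  { destruct (Req_dec q 0). subst. assert (p < 1)%R by nra. nra. nra. }
  assert (Re ((1 + (p, q)) / (1 - (p, q))) = ((1 - p * p - q * q) / ((1 - p) * (1 - p) + q * q))%R).
  { simpl. field; repeat split; nra. }
  rewrite H. apply Rdiv_lt_0_compat; nra.
Qed.

Lemma H21_ext : Cmod (H21 a_ext) = (/ 4)%R.
Proof.
  assert (E : H21 a_ext = RtoC (- / 4)).
  { unfold H21, gamma1, gamma2, gamma3, a_ext. simpl.
    apply injective_projections; simpl; field. }
  rewrite E, Cmod_R, Rabs_left. field. apply Ropp_lt_gt_0_contravar. lra.
Qed.

Lemma part2 : (exists f' : C -> C, class_F2 f_ext f' a_ext) /\ Cmod (H21 a_ext) = (/ 4)%R.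
Proof.
  split; [|exact H21_ext].
  exists fext'. unfold class_F2. split; [|split].
  - unfold class_A. split; [reflexivity|]. split; [reflexivity|]. intros z Hz. apply ext_series; auto.
  - intros z Hz. apply ext_deriv; auto.
  - intros z Hz. apply ext_pos; auto.
Qed.

Theorem theorem2p2 :
  (forall (f f' : C -> C) (a : nat -> C),
      class_F2 f f' a -> (Cmod (H21 a) <= / 4)%R) /\
  ((exists f' : C -> C, class_F2 f_ext f' a_ext) /\ Cmod (H21 a_ext) = (/ 4)%R).
Proof.
  split.
  - exact part1.
  - exact part2.
Qed.
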